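(* Let $Y$ be a real-valued random variable (representing the conditional distribution of the potential reward $R(a,x)$ given $A=a$, $X=x$) with finite second moment, and let $\alpha\ge 0$. Consider the problem $$\min_{D}\ \mathbb{E}\big[Y\,D(Y)\big]$$ over measurable functions $D:\mathbb{R}\to\mathbb{R}$ subject to (i) $D(r)\ge 0$ for all $r$, (ii) $\mathbb{E}[D(Y)]=1$, and (iii) $D(r_1)\le e^{2\alpha} D(r_2)$ for all $r_1,r_2$. Then the optimal value of this problem equals $\lambda^*$, where $\lambda^*$ is a minimizer over $\lambda\in\mathbb{R}$ of $$\mathbb{E}\big[\ell_\alpha(Y,\lambda)\big],\qquad \ell_\alpha(y,\lambda)=\{y-\lambda\}_+^2+e^{2\alpha}\{y-\lambda\}_-^2 ,$$ where $\{t\}_+=\max(t,0)$ and $\{t\}_-=\max(-t,0)$. Equivalently, with conditioning on $A=a$, $X=x$, the value $\min_D \mathbb{E}[R(a,x)D(R(a,x))\mid A=a,X=x]$ equals $f^*_{a,a'}(x)$, where $f^*_{a,a'}$ minimizes $\mathbb{E}[\ell_\alpha(R(a,x),f_{a,a'}(x))\mid A=a,X=x]$ over functions $f_{a,a'}$.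
   Context: In the paper, $D$ plays the role of the Radon–Nikodym ratio $D(r,x,a,a')=\mathrm{d}P_{R(a,x)\mid A=a',X=x}/\mathrm{d}P_{R(a,x)\mid A=a,X=x}(r)$ between conditional laws of the potential reward under a perturbed logging policy, and the constrained minimum gives a lower bound on $\mathbb{E}[R(a,x)\mid A=a',X=x]$ under uncertainty level $\alpha$. *)

(* Defs.v *)
From HB Require Import structures.
From mathcomp Require Import all_boot all_order all_algebra.
From mathcomp Require Import all_classical all_reals all_analysis.
Set Implicit Arguments. Unset Strict Implicit. Unset Printing Implicit Defensive.
Import Order.TTheory GRing.Theory Num.Theory.
Local Open Scope ring_scope.
Local Open Scope classical_set_scope.

Definition pos_part (R : realType) (t : R) : R := Num.max t 0.
Definition neg_part (R : realType) (t : R) : R := Num.max (- t) 0.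

Definition ell (R : realType) (alpha y lam : R) : R :=
  (pos_part (y - lam)) ^+ 2 + expR (2 * alpha) * (neg_part (y - lam)) ^+ 2.

Definition risk d (T : measurableType d) (R : realType) (P : probability T R)
  (Y : T -> R) (alpha lam : R) : \bar R :=
  (\int[P]_w (ell alpha (Y w) lam)%:E)%E.

Definition objective d (T : measurableType d) (R : realType) (P : probability T R)
  (Y : T -> R) (D : R -> R) : \bar R :=
  (\int[P]_w (Y w * D (Y w))%:E)%E.

Definition feasible d (T : measurableType d) (R : realType) (P : probability T R)
  (Y : T -> R) (alpha : R) (D : R -> R) : Prop :=
  [/\ measurable_fun setT D,
      (forall r, 0 <= D r),
      (\int[P]_w (D (Y w))%:E = 1)%E &
      (forall r1 r2, D r1 <= expR (2 * alpha) * D r2)].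

(* Main.v *)
Require Import Defs.
From HB Require Import structures.
From mathcomp Require Import all_boot all_order all_algebra.
From mathcomp Require Import all_classical all_reals all_analysis.
From mathcomp Require Import measurable_realfun ring lra.
Import Order.TTheory GRing.Theory Num.Theory.
Local Open Scope ring_scope.
Local Open Scope classical_set_scope.
Set Implicit Arguments. Unset Strict Implicit.

Definition J d (T : measurableType d) (R : realType) (P : probability T R) (f : T -> R) : R :=
  fine (\int[P]_w (f w)%:E)%E.

Lemma intE d (T : measurableType d) (R : realType) (P : probability T R) (f : T -> R) :
  P.-integrable setT (EFin \o f) -> (\int[P]_w (f w)%:E)%E = (J P f)%:E.
Proof. by move=> fi; rewrite /J fineK//; exact: integrable_fin_num fi. Qed.

Lemma JD d (T : measurableType d) (R : realType) (P : probability T R) (f g : T -> R) :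
  P.-integrable setT (EFin \o f) -> P.-integrable setT (EFin \o g) ->
  J P (fun w => f w + g w) = J P f + J P g.
Proof.
move=> fi gi; rewrite /J.
under eq_integral do rewrite EFinD.
by rewrite integralD// (intE fi) (intE gi).
Qed.

Lemma JZ d (T : measurableType d) (R : realType) (P : probability T R) (k : R) (f : T -> R) :
  P.-integrable setT (EFin \o f) ->
  J P (fun w => k * f w) = k * J P f.
Proof.
move=> fi; rewrite /J.
under eq_integral do rewrite EFinM.
by rewrite integralZl// (intE fi).
Qed.

Lemma Jle d (T : measurableType d) (R : realType) (P : probability T R) (f g : T -> R) :
  P.-integrable setT (EFin \o f) -> P.-integrable setT (EFin \o g) ->
  (forall w, f w <= g w) -> J P f <= J P g.
Proof.
move=> fi gi fg; rewrite -lee_fin -(intE fi) -(intE gi).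
by apply: le_integral => // w _; rewrite lee_fin.
Qed.

Lemma Jcst d (T : measurableType d) (R : realType) (P : probability T R) (k : R) :
  J P (fun _ => k) = k.
Proof.
rewrite /J; have := @integral_cst _ _ _ P setT measurableT k%:E.
by rewrite /cst/= probability_setT mule1 => ->.
Qed.

Lemma intcst d (T : measurableType d) (R : realType) (P : probability T R) (k : R) :
  P.-integrable setT (EFin \o (fun _ : T => k)).
Proof.
apply/integrableP; split; first by rewrite /comp; exact: measurable_cst.
have := @integral_cst _ _ _ P setT measurableT `|k|%:E.
rewrite /cst/= probability_setT mule1 => h.
by rewrite /comp/= h ltry.
Qed.

Lemma dom d (T : measurableType d) (R : realType) (P : probability T R) (Y f : T -> R) (A B : R) :
  P.-integrable setT (fun w => ((Y w) ^+ 2)%:E) ->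
  measurable_fun setT f -> 0 <= A -> 0 <= B ->
  (forall w, `|f w| <= A * Y w ^+ 2 + B) -> P.-integrable setT (EFin \o f).
Proof.
move=> Yi mf A0 B0 fb.
have gi : P.-integrable setT (EFin \o (fun w => A * Y w ^+ 2 + B)).
  rewrite /comp; under eq_fun do rewrite EFinD EFinM.
  apply: integrableD => //; first exact: integrableZl.
  exact: intcst.
apply: le_integrable gi => //; first exact/measurable_EFinP.
move=> w _ /=; rewrite lee_fin; apply: (le_trans (fb w)).
rewrite ger0_norm//; apply: addr_ge0 => //; apply: mulr_ge0 => //; exact: sqr_ge0.
Qed.
Lemma taylor (R : realType) (alpha y l h : R) : 1 <= expR (2 * alpha) ->
  ell alpha y (l + h) <= ell alpha y l
    + (- (2 * h)) * pos_part (y - l) + (2 * h * expR (2 * alpha)) * neg_part (y - l)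
    + expR (2 * alpha) * h ^+ 2.
Proof.
rewrite /ell /pos_part /neg_part; set c := expR _ => c1.
have -> : y - (l + h) = (y - l) - h by ring.
set t := y - l.
have [t0|t0] := leP 0 t; have [th|th] := leP 0 (t - h).
- rewrite (max_r (_ : - (t - h) <= 0)) ?(max_r (_ : - t <= 0)); try lra; rewrite ?expr0n /= ?mulr0 ?addr0 ?mul0r ?add0r; have := sqr_ge0 h; have := sqr_ge0 (t - h); nra.
- rewrite (max_l (_ : 0 <= - (t - h))) ?(max_r (_ : - t <= 0)); try lra; rewrite ?expr0n /= ?mulr0 ?addr0 ?mul0r ?add0r; have u0 : 0 <= (c - 1) * t by apply: mulr_ge0; lra. have h0 : 0 <= h by lra. nra.
- rewrite (max_r (_ : - (t - h) <= 0)) ?(max_l (_ : 0 <= - t)); try lra; rewrite ?expr0n /= ?mulr0 ?addr0 ?mul0r ?add0r; have := sqr_ge0 h; have := sqr_ge0 (t - h); nra.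
- rewrite (max_l (_ : 0 <= - (t - h))) ?(max_l (_ : 0 <= - t)); try lra; rewrite ?expr0n /= ?mulr0 ?addr0 ?mul0r ?add0r; have := sqr_ge0 h; have := sqr_ge0 (t - h); nra.
Qed.

Lemma pn_split (R : realType) (c t : R) :
  t * (if 0 <= t then 1 else c) = pos_part t - c * neg_part t.
Proof.
rewrite /pos_part /neg_part; have [t0|t0] := leP 0 t.
- rewrite (max_r (_ : - t <= 0)); lra.
- rewrite (max_l (_ : 0 <= - t)); lra.
Qed.

Lemma pn_lb (R : realType) (c t m x : R) : m <= x -> x <= c * m ->
  m * pos_part t + (- (c * m)) * neg_part t <= t * x.
Proof.
rewrite /pos_part /neg_part => h1 h2; have [t0|t0] := leP 0 t.
- rewrite (max_r (_ : - t <= 0)); nra.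
- rewrite (max_l (_ : 0 <= - t)); nra.
Qed.

Lemma ell_bound (R : realType) (alpha y l : R) : 1 <= expR (2 * alpha) ->
  `|ell alpha y l| <= (2 * expR (2 * alpha)) * y ^+ 2 + 2 * expR (2 * alpha) * l ^+ 2.
Proof.
rewrite /ell /pos_part /neg_part; set c := expR _ => c1.
have [t0|t0] := leP 0 (y - l).
- rewrite (max_r (_ : - (y - l) <= 0)); last lra.
  rewrite expr0n /= mulr0 addr0 ger0_norm; last exact: sqr_ge0.
  have := sqr_ge0 (y + l); have := mulr_ge0 (_ : 0 <= c - 1) (sqr_ge0 y); have := mulr_ge0 (_ : 0 <= c - 1) (sqr_ge0 l); nra.
- rewrite (max_l (_ : 0 <= - (y - l))); last lra.
  rewrite expr0n /= add0r ger0_norm; last by apply: mulr_ge0; [lra|exact: sqr_ge0].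
  have := sqr_ge0 (y + l); have := mulr_ge0 (_ : 0 <= c - 1) (sqr_ge0 y); have := mulr_ge0 (_ : 0 <= c - 1) (sqr_ge0 l).
  have := sqr_ge0 (- (y - l)); nra.
Qed.

Lemma norm_bnd (R : realType) (y : R) : `|y| <= y ^+ 2 + 1.
Proof. rewrite -real_normK ?num_real//; have := normr_ge0 y; nra. Qed.
Lemma intD d (T : measurableType d) (R : realType) (P : probability T R) (f g : T -> R) :
  P.-integrable setT (EFin \o f) -> P.-integrable setT (EFin \o g) ->
  P.-integrable setT (EFin \o (fun w => f w + g w)).
Proof.
move=> fi gi; have -> : EFin \o (fun w => f w + g w) = (EFin \o f) \+ (EFin \o g).
  by apply/funext => w.
exact: integrableD.
Qed.

Lemma intZ d (T : measurableType d) (R : realType) (P : probability T R) (k : R) (f : T -> R) :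
  P.-integrable setT (EFin \o f) ->
  P.-integrable setT (EFin \o (fun w => k * f w)).
Proof.
move=> fi; have -> : EFin \o (fun w => k * f w) = (fun w => (k%:E * (EFin \o f) w)%E).
  by apply/funext => w.
exact: integrableZl.
Qed.

Lemma measF d (T : measurableType d) (R : realType) (Y : T -> R) (F : R -> R) :
  measurable_fun setT Y -> measurable_fun setT F -> measurable_fun setT (fun w => F (Y w)).
Proof. by move=> mY mF; exact: measurableT_comp. Qed.

Lemma meas_pos (R : realType) (l : R) : measurable_fun setT (fun y : R => pos_part (y - l)).
Proof.
apply: measurable_maxr; last exact: measurable_cst.
by apply: measurable_funB => //; exact: measurable_cst.
Qed.

Lemma meas_neg (R : realType) (l : R) : measurable_fun setT (fun y : R => neg_part (y - l)).
Proof.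
apply: measurable_maxr; last exact: measurable_cst.
apply: measurable_funN; apply: measurable_funB => //; exact: measurable_cst.
Qed.

Lemma meas_ell (R : realType) (alpha l : R) : measurable_fun setT (fun y : R => ell alpha y l).
Proof.
rewrite /ell.
have m1 : measurable_fun setT (fun y : R => pos_part (y - l) ^+ 2).
  exact: measurable_funX (meas_pos l).
have m2 : measurable_fun setT (fun y : R => neg_part (y - l) ^+ 2).
  exact: measurable_funX (meas_neg l).
have m3 := measurable_funM (measurable_cst (expR (2 * alpha))) m2.
exact: (measurable_funD m1 m3).
Qed.

Theorem lemma2 (d : measure_display) (T : measurableType d) (R : realType)
  (P : probability T R) (Y : T -> R) (alpha lamstar : R) :
  measurable_fun setT Y ->
  P.-integrable setT (fun w => ((Y w) ^+ 2)%:E) ->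
  0 <= alpha ->
  (forall lam : R, (risk P Y alpha lamstar <= risk P Y alpha lam)%E) ->
  (exists D : R -> R, feasible P Y alpha D /\ objective P Y D = lamstar%:E) /\
  (forall D : R -> R, feasible P Y alpha D -> (lamstar%:E <= objective P Y D)%E).
Proof.
move=> mY Y2 a0 hmin.
set c := expR (2 * alpha).
have c1 : 1 <= c by rewrite /c; have := expR_ge1Dx (2 * alpha); lra.
set l := lamstar.
have nb : forall w, `|Y w| <= Y w ^+ 2 + 1 by move=> w; exact: norm_bnd.
have nyb : forall w, Y w <= `|Y w| /\ - Y w <= `|Y w|.
  by move=> w; split; [exact: ler_norm | rewrite -normrN; exact: ler_norm].
have nlb : l <= `|l| /\ - l <= `|l|.
  by split; [exact: ler_norm | rewrite -normrN; exact: ler_norm].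
pose p w := pos_part (Y w - l).
pose n w := neg_part (Y w - l).
have ip : P.-integrable setT (EFin \o p).
  apply: (@dom _ _ _ P Y _ 1 (1 + `|l|)) => //; first exact: measF (meas_pos l).
  move=> w; rewrite /p /pos_part ger0_norm ?le_max ?lexx ?orbT// ge_max.
  have := nb w; have := nyb w; have := sqr_ge0 (Y w); have := normr_ge0 l.
  move: nlb => [? ?] ? ? [? ?] ?; apply/andP; split; lra.
have in_ : P.-integrable setT (EFin \o n).
  apply: (@dom _ _ _ P Y _ 1 (1 + `|l|)) => //; first exact: measF (meas_neg l).
  move=> w; rewrite /n /neg_part ger0_norm ?le_max ?lexx ?orbT// ge_max.
  have := nb w; have := nyb w; have := sqr_ge0 (Y w); have := normr_ge0 l.
  move: nlb => [? ?] ? ? [? ?] ?; apply/andP; split; lra.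
have iell : forall mu, P.-integrable setT (EFin \o (fun w => ell alpha (Y w) mu)).
  move=> mu; apply: (@dom _ _ _ P Y _ (2 * c) (2 * c * mu ^+ 2)) => //.
  - exact: measF (meas_ell alpha mu).
  - lra.
  - by apply: mulr_ge0; [lra|exact: sqr_ge0].
  by move=> w; exact: ell_bound.
have riskE : forall mu, risk P Y alpha mu = (J P (fun w => ell alpha (Y w) mu))%:E.
  by move=> mu; rewrite /risk (intE (iell mu)).
pose g := J P p - c * J P n.
have key : forall h, 0 <= - (2 * h) * J P p + (2 * h * c) * J P n + c * h ^+ 2.
  move=> h; have := hmin (l + h); rewrite !riskE lee_fin => le1.
  have le2 : J P (fun w => ell alpha (Y w) (l + h)) <=
     J P (fun w => ell alpha (Y w) l + (- (2 * h)) * p w + (2 * h * c) * n w + c * h ^+ 2).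
    apply: Jle => //; first by apply: intD; [apply: intD; [apply: intD; [exact: iell|exact: intZ]|exact: intZ]|exact: intcst].
    by move=> w; exact: taylor.
  rewrite JD in le2; last exact: intcst.
    rewrite JD in le2; last exact: intZ.
      rewrite JD in le2; [|exact: iell|exact: intZ].
      rewrite Jcst !JZ // in le2; lra.
    by apply: intD; [exact: iell|exact: intZ].
  by apply: intD; [apply: intD; [exact: iell|exact: intZ]|exact: intZ].
have g0 : g = 0.
  have cp : 0 < c by lra.
  pose h := g / c.
  have hc : h * c = g by rewrite /h mulfVK //; lra.
  have := key h => k1.
  have hc' : h * c = J P p - c * J P n by rewrite hc.
  have e1 : - (2 * h) * J P p + (2 * h * c) * J P n = - 2 * h * (h * c).
    by rewrite hc'; ring.
  have : h ^+ 2 * c <= 0 by rewrite e1 in k1; nra.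
  have := sqr_ge0 h => ? ?.
  have h2 : h ^+ 2 = 0 by nra.
  have h0 : h = 0 by apply/eqP; rewrite -sqrf_eq0; apply/eqP.
  by rewrite -hc h0 mul0r.
have cp : 0 < c by lra.
split.
  pose wt (r : R) := if l <= r then 1 else c.
  have mwt : measurable_fun setT wt.
    apply: measurable_fun_ifT; last 2 first.
    - exact: measurable_cst.
    - exact: measurable_cst.
    apply: (@measurable_fun_ler _ R R setT (fun=> l) id); [exact: measurable_cst|exact: measurable_id].
  have wt1 : forall r, 1 <= wt r /\ wt r <= c.
    by move=> r; rewrite /wt; case: ifP => _; lra.
  have iwt : P.-integrable setT (EFin \o (fun w => wt (Y w))).
    apply: (@dom _ _ _ P Y _ 0 c) => //; first exact: measF.
    - lra.
    by move=> w; have [? ?] := wt1 (Y w); rewrite ger0_norm; lra.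
  pose Z := J P (fun w => wt (Y w)).
  have Z1 : 1 <= Z.
    rewrite -[1 in X in X <= _](Jcst P).
    apply: Jle => //; first exact: intcst.
    by move=> w; have [? ?] := wt1 (Y w).
  have Zn : Z != 0 by rewrite gt_eqF //; lra.
  have E : forall w, (Y w - l) * wt (Y w) = p w - c * n w.
    by move=> w; rewrite /wt -subr_ge0; exact: pn_split.
  exists (fun r => wt r / Z); split; first split.
  - exact: (measurable_funM mwt (measurable_cst Z^-1)).
  - by move=> r; have [? ?] := wt1 r; apply: divr_ge0; lra.
  - transitivity (\int[P]_w (Z^-1 * wt (Y w))%:E)%E.
      by apply: eq_integral => w _; rewrite mulrC.
    rewrite intE; last exact: intZ.
    by rewrite JZ // mulVf.
  - move=> r1 r2; rewrite mulrA; apply: ler_wpM2r; first by rewrite invr_ge0; lra.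
    rewrite -/c; have [? ?] := wt1 r1; have [? ?] := wt1 r2; nra.
  rewrite /objective.
  transitivity (\int[P]_w (Z^-1 * ((p w + (- c) * n w) + l * wt (Y w)))%:E)%E.
    apply: eq_integral => w _; congr EFin.
    have -> : p w + (- c) * n w = (Y w - l) * wt (Y w) by rewrite E; ring.
    ring.
  rewrite intE; last by apply: intZ; apply: intD; [apply: intD; [exact: ip|exact: intZ]|exact: intZ].
  rewrite JZ; last by apply: intD; [apply: intD; [exact: ip|exact: intZ]|exact: intZ].
  rewrite JD; [|by apply: intD; [exact: ip|exact: intZ]|exact: intZ].
  rewrite JD //; last exact: intZ.
  rewrite !JZ // -/Z.
  rewrite (_ : J P p + - c * J P n = 0); last by rewrite -g0 /g; ring.
  by rewrite add0r mulrCA mulVf // mulr1.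
move=> D [mD D0 D1 Dc].
pose K := c * D 0.
have DK : forall r, D r <= K by move=> r; exact: Dc.
have K0 : 0 <= K by apply: mulr_ge0; [lra|exact: D0].
have hb : has_lbound (range D) by exists 0 => _ [x _ <-]; exact: D0.
pose m := inf (range D).
have hm1 : forall r, m <= D r by move=> r; apply: (ge_inf hb); exists r.
have hm2 : forall r, D r <= c * m.
  move=> r; rewrite mulrC -ler_pdivrMr //.
  apply: lb_le_inf; first by exists (D 0); exists 0.
  by move=> _ [x _ <-]; rewrite ler_pdivrMr // mulrC; exact: Dc.
have iDY : P.-integrable setT (EFin \o (fun w => D (Y w))).
  apply: (@dom _ _ _ P Y _ 0 K) => //; first exact: measF.
  by move=> w; rewrite ger0_norm ?D0 //; have := DK (Y w); lra.
have iYD : P.-integrable setT (EFin \o (fun w => Y w * D (Y w))).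
  apply: (@dom _ _ _ P Y _ K K) => //.
    exact: (measurable_funM mY (measF mY mD)).
  move=> w; rewrite normrM (ger0_norm (D0 _)).
  have := DK (Y w); have := D0 (Y w); have := nb w; have := normr_ge0 (Y w); nra.
move: D1; rewrite (intE iDY) => -[JD1].
rewrite /objective (intE iYD) lee_fin.
have le1 : J P (fun w => m * p w + (- (c * m)) * n w) <=
           J P (fun w => Y w * D (Y w) + (- l) * D (Y w)).
  apply: Jle.
  - by apply: intD; exact: intZ.
  - by apply: intD => //; exact: intZ.
  move=> w; rewrite -mulrDl; exact: pn_lb.
rewrite JD in le1; [|exact: intZ|exact: intZ].
rewrite JD in le1; [|exact: iYD|exact: intZ].
rewrite !JZ // JD1 in le1.
have : m * J P p + - (c * m) * J P n = m * g by rewrite /g; ring.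
rewrite g0 mulr0 => e; rewrite e in le1; lra.
Qed.
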